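(* Let $G$ be a graph of order $n\ge1$. Then $\operatorname{zir}(G)=1$ if and only if $G\cong P_n$ or $G\cong K_{1,n-1}$.
   Context: $P_n$ is the path on $n$ vertices, $K_{1,n-1}$ the star. A nonempty $F\subseteq V(G)$ is a fort if every $v\notin F$ has $|N(v)\cap F|\ne1$. A private fort of $x\in S$ relative to $S$ is a fort $F$ with $S\cap F=\{x\}$; $S$ is a ZIr-set if every element of $S$ has a private fort. $\operatorname{zir}(G)$ is the minimum cardinality of an inclusion-maximal ZIr-set. *)

(* Defs.v *)
(* A simple graph on a finite vertex type T is a
   symmetric irreflexive boolean relation e : rel T. *)
From mathcomp Require Import all_boot.
Set Implicit Arguments. Unset Strict Implicit. Unset Printing Implicit Defensive.

Section Zir.
Variables (T : finType) (e : rel T).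

Definition nbhd (v : T) : {set T} := [set u | e v u].

Definition fort (F : {set T}) : bool :=
  (F != set0) && [forall v, (v \notin F) ==> (#|nbhd v :&: F| != 1)].

Definition private_fort (S : {set T}) (x : T) (F : {set T}) : bool :=
  fort F && (S :&: F == [set x]).

Definition ZIr_set (S : {set T}) : bool :=
  [forall x in S, exists F : {set T}, private_fort S x F].

Definition maximal_ZIr_set (S : {set T}) : bool := maxset ZIr_set S.

(* zir(G): minimum cardinality of an inclusion-maximal ZIr-set
   (#|T| is a valid upper bound / default, since every set has size <= #|T|) *)
Definition zir : nat :=
  \big[minn/#|T|]_(S : {set T} | maximal_ZIr_set S) #|S|.

End Zir.

Definition path_rel (n : nat) : rel 'I_n :=
  fun i j => (i.+1 == j :> nat) || (j.+1 == i :> nat).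

Definition star_rel (n : nat) : rel 'I_n :=
  fun i j => (i != j) && ((i == 0 :> nat) || (j == 0 :> nat)).

Definition graph_iso (T T' : finType) (e : rel T) (e' : rel T') : Prop :=
  exists f : T -> T', bijective f /\ forall x y, e x y = e' (f x) (f y).

(* Main.v *)
Require Import Defs.
From mathcomp Require Import all_boot zify.
From mathcomp Require Import fingroup perm.
Set Implicit Arguments. Unset Strict Implicit. Unset Printing Implicit Defensive.

Section Main.
Variables (T : finType) (e : rel T).
Hypothesis esymm : symmetric e.
Hypothesis eirr : irreflexive e.

Definition Pf a b := exists F, fort e F /\ a \in F /\ b \notin F.

Lemma in_nbhd u v : (v \in nbhd e u) = e u v.
Proof. by rewrite inE. Qed.

Lemma fort_compl (W : {set T}) : ~: W != set0 ->
  (forall w, w \in W -> #|nbhd e w :\: W| != 1) -> fort e (~: W).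
Proof.
move=> ne H; rewrite /fort ne /=; apply/forallP=> v; apply/implyP.
by rewrite inE negbK => vW; rewrite -setDE; apply: H.
Qed.

Lemma sub_nbhd w (W : {set T}) : nbhd e w \subset W -> #|nbhd e w :\: W| != 1.
Proof.
by move=> s; rewrite (_ : nbhd e w :\: W = set0) ?cards0 //; apply/eqP; rewrite setD_eq0.
Qed.

Lemma fort_setC1 y z : z != y -> #|nbhd e y| != 1 -> fort e (~: [set y]).
Proof.
move=> zy dy; apply: fort_compl.
  by apply/set0Pn; exists z; rewrite !inE.
move=> w; rewrite inE => /eqP ->.
rewrite (_ : nbhd e y :\: [set y] = nbhd e y) //.
apply/setP=> v; rewrite !inE; case: (v =P y) => // ->; by rewrite eirr.
Qed.

Lemma fortT (x : T) : fort e setT.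
Proof.
rewrite /fort; apply/andP; split; first by apply/set0Pn; exists x; rewrite inE.
by apply/forallP => v; rewrite inE.
Qed.

Lemma ZIr1 x : ZIr_set e [set x].
Proof.
apply/forall_inP => z; rewrite inE => /eqP ->; apply/existsP; exists setT.
by rewrite /private_fort (fortT x) setIT eqxx.
Qed.

Lemma priv S a b F : private_fort e S a F -> b \in S -> b != a -> Pf a b.
Proof.
move=> /andP[f /eqP H] bS ba; exists F; split=> //; split.
  have: a \in S :&: F by rewrite H set11.
  by rewrite inE => /andP[].
apply/negP => bF; have: b \in S :&: F by rewrite inE bS bF.
by rewrite H inE (negbTE ba).
Qed.

Lemma maximal1 x : maximal_ZIr_set e [set x] <->
  (forall y, y != x -> ~ (Pf x y /\ Pf y x)).
Proof.
split.
  move=> /maxsetP [ZI Hmax] y yx [[F1 [f1 [xF1 yF1]]] [F2 [f2 [yF2 xF2]]]].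
  have Z2 : ZIr_set e [set x; y].
    apply/forall_inP => z; rewrite !inE => /orP[/eqP->|/eqP->]; apply/existsP.
      exists F1; rewrite /private_fort f1 /=; apply/eqP/setP=> w; rewrite !inE.
      case: (w =P x) => [->|wx] //=; case: (w =P y) => [->|wy] //=.
      by rewrite (negbTE yF1).
    exists F2; rewrite /private_fort f2 /=; apply/eqP/setP=> w; rewrite !inE.
    case: (w =P y) => [->|wy] //=; rewrite ?orbT //; case: (w =P x) => [->|wx] //=.
    by rewrite (negbTE xF2).
  have := Hmax _ Z2; rewrite (_ : [set x] \subset [set x; y]); last first.
    by apply/subsetP => w; rewrite !inE => ->.
  move=> /(_ isT) /setP /(_ y); rewrite !inE eqxx orbT => /esym /eqP yx'.
  by rewrite yx' eqxx in yx.
move=> H; apply/maxsetP; split; first exact: ZIr1.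
move=> B ZB sub; apply/eqP; rewrite eqEsubset sub andbT.
have xB : x \in B by apply: (subsetP sub); rewrite set11.
apply/subsetP=> y yB; rewrite inE; apply/negPn/negP => yx.
apply: (H y yx); split.
  have /existsP [F pF] := forall_inP ZB x xB; exact: priv pF yB yx.
have /existsP [F pF] := forall_inP ZB y yB; apply: priv pF xB _.
by rewrite eq_sym.
Qed.

Lemma max_nonempty (x : T) S : maximal_ZIr_set e S -> 0 < #|S|.
Proof.
move=> /maxsetP[ZS Hm]; rewrite card_gt0; apply/negP=> /eqP S0.
have := Hm [set x] (ZIr1 x); rewrite S0 sub0set => /(_ isT) /setP /(_ x).
by rewrite !inE eqxx.
Qed.

Lemma bigmin_le (I : finType) (P : pred I) (F : I -> nat) d i :
  P i -> \big[minn/d]_(j | P j) F j <= F i.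
Proof.
move=> Pi; have : i \in index_enum I by rewrite mem_index_enum.
elim: (index_enum I) => // j r IH; rewrite inE big_cons => /orP[/eqP<-|/IH H].
  by rewrite Pi geq_minl.
by case: ifP => // _; apply: leq_trans (geq_minr _ _) H.
Qed.

Lemma zir_eq1 x : maximal_ZIr_set e [set x] -> zir e = 1.
Proof.
move=> mx; apply/eqP; rewrite eqn_leq; apply/andP; split.
  rewrite /zir; have := @bigmin_le _ (maximal_ZIr_set e) (fun S => #|S|) #|T| _ mx; by rewrite cards1.
rewrite /zir; apply: (big_ind (fun m => 0 < m)).
- by apply/card_gt0P; exists x.
- by move=> a b; rewrite leq_min => -> ->.
- by move=> S; apply: max_nonempty.
Qed.

Lemma zir1_ex : 0 < #|T| -> zir e = 1 -> exists x, maximal_ZIr_set e [set x].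
Proof.
move=> /card_gt0P [x0 _] z1.
case: (boolP [exists S, maximal_ZIr_set e S && (#|S| == 1)]).
  by move=> /existsP[S /andP[mS /cards1P[x Sx]]]; exists x; rewrite -Sx.
rewrite negb_exists => /forallP H.
have ge2 : forall S, maximal_ZIr_set e S -> 1 < #|S|.
  move=> S mS; have := max_nonempty x0 mS; have := H S; rewrite mS /=.
  by case: #|S| => [|[|]].
have Z0 : ZIr_set e set0 by apply/forall_inP => z; rewrite inE.
have [A mA _] := maxset_exists Z0.
have : 1 < zir e.
  rewrite /zir; apply: (big_ind (fun m => 1 < m)).
  - exact: leq_trans (ge2 _ mA) (max_card _).
  - by move=> a b; rewrite leq_min => -> ->.
  - exact: ge2.
by rewrite z1.
Qed.


Lemma star_case x : (forall y, y != x -> ~ (Pf x y /\ Pf y x)) ->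
  #|nbhd e x| != 1 -> forall u v, e u v = (u != v) && ((u == x) || (v == x)).
Proof.
move=> H dx.
have Pyx : forall y, y != x -> Pf y x.
  move=> y yx; exists (~: [set x]); split; first exact: fort_setC1 yx dx.
  by rewrite !inE yx eqxx.
have nPxy : forall y, y != x -> ~ Pf x y.
  by move=> y yx Pxy; apply: (H y yx); split => //; apply: Pyx.
have deg1 : forall y, y != x -> #|nbhd e y| = 1.
  move=> y yx; apply/eqP; apply/negPn/negP => dy; apply: (nPxy y yx).
  have xy : x != y by rewrite eq_sym.
  exists (~: [set y]); split; first exact: fort_setC1 xy dy.
  by rewrite !inE xy eqxx.
have nbx : forall y, y != x -> nbhd e y = [set x].
  move=> y yx; have /eqP/cards1P[z Hz] := deg1 y yx.
  case: (z =P x) => [<-//|zx]; exfalso; apply: (nPxy y yx).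
  have eyz : e y z by rewrite -in_nbhd Hz set11.
  have zx' : z != x by apply/eqP.
  have Hz' : nbhd e z = [set y].
    have /eqP/cards1P[w Hw] := deg1 z zx'.
    have : y \in nbhd e z by rewrite in_nbhd esymm.
    by rewrite Hw inE => /eqP ->.
  exists (~: [set y; z]); split; last first.
    by rewrite !inE ![x == _]eq_sym (negbTE yx) (negbTE zx') eqxx.
  apply: fort_compl; first by apply/set0Pn; exists x; rewrite !inE ![x == _]eq_sym (negbTE yx) (negbTE zx').
  move=> w; rewrite !inE => /orP[/eqP->|/eqP->]; apply: sub_nbhd.
    by rewrite Hz; apply/subsetP => v; rewrite !inE => ->; rewrite orbT.
  by rewrite Hz'; apply/subsetP => v; rewrite !inE => ->.
move=> u v; case: (u =P x) => [->|ux].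
  case: (v =P x) => [->|vx]; first by rewrite eirr eqxx.
  have vx' : v != x by apply/eqP.
  by rewrite esymm -in_nbhd (nbx v vx') set11 eq_sym vx'. 
have ux' : u != x by apply/eqP.
rewrite -in_nbhd (nbx u ux') inE /=.
case: (v =P x) => [->|vx]; rewrite ?eqxx ?andbT ?andbF ?ux' //.
Qed.


Definition Inv x k (p : nat -> T) :=
 [/\ p 0 = x,
  forall i j, i <= k -> j <= k -> p i = p j -> i = j,
  forall i, i < k -> e (p i) (p i.+1) &
  forall i u, i < k -> e (p i) u -> u = p i.+1 \/ exists2 j, j.+1 = i & u = p j].

Definition Cset k (p : nat -> T) := [set p (nat_of_ord i) | i : 'I_k.+1].

Lemma inC k p u : reflect (exists2 i, i <= k & u = p i) (u \in Cset k p).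
Proof.
apply: (iffP imsetP) => [[i _ ->]|[i ik ->]]; first by exists i; first exact: ltn_ord i.
by exists (Ordinal (ik : i < k.+1)).
Qed.

Lemma nbhdC x k p i : Inv x k p -> i < k -> nbhd e (p i) \subset Cset k p.
Proof.
move=> [_ _ _ Hn] ik; apply/subsetP => u; rewrite in_nbhd => /(Hn _ _ ik).
case=> [->|[j ji ->]]; apply/inC; first by exists i.+1.
by exists j => //; apply: ltnW; rewrite ji ltnW.
Qed.

Lemma adj_gen x k p a b : Inv x k p -> a < k -> b <= k -> e (p a) (p b) ->
  b = a.+1 \/ b.+1 = a.
Proof.
move=> [_ Hi _ Hn] ak bk /(Hn _ _ ak) [E|[j ja E]].
  by left; apply: Hi E.
have jk : j <= k by apply: ltnW; rewrite ja ltnW.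
by right; rewrite (Hi _ _ bk jk E).
Qed.

Lemma adj x k p i j : Inv x k p -> i <= k -> j <= k ->
  e (p i) (p j) = (i.+1 == j) || (j.+1 == i).
Proof.
move=> I ik jk; have [_ Hi He _] := I.
case: (boolP ((i.+1 == j) || (j.+1 == i))) => [/orP[/eqP E|/eqP E]|H].
- by subst j; apply: He.
- by subst i; rewrite esymm He.
apply/negbTE/negP => E; move: H; rewrite negb_or.
case: (ltnP i k) => [ilt|ige].
  by case: (adj_gen I ilt jk E) => ->; rewrite !eqxx ?andbF.
case: (ltnP j k) => [jlt|jge].
  rewrite esymm in E.
  by case: (adj_gen I jlt ik E) => ->; rewrite !eqxx ?andbF.
have ij : i = j by apply/eqP; rewrite eqn_leq (leq_trans ik jge) (leq_trans jk ige).
by move: E; rewrite ij eirr.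
Qed.

Lemma path_iso x n' p : #|T| = n'.+1 -> Inv x n' p -> graph_iso e (@path_rel n'.+1).
Proof.
move=> cT I; have [_ Hi _ _] := I.
pose g := fun i : 'I_n'.+1 => p (nat_of_ord i).
have ginj : injective g.
  by move=> i j /Hi E; apply: val_inj; apply: E; rewrite -ltnS ltn_ord.
have [g' K1 K2] : bijective g by apply: inj_card_bij => //; rewrite card_ord cT.
exists g'; split; first by exists g.
move=> u v; rewrite -{1}(K2 u) -{1}(K2 v) /g /path_rel.
by apply: (adj I); rewrite -ltnS ltn_ord.
Qed.


Lemma chain x : (forall y, y != x -> ~ (Pf x y /\ Pf y x)) ->
  #|nbhd e x| = 1 -> forall k, k < #|T| -> exists p, Inv x k p.
Proof.
move=> H dx; elim=> [_|k IH kn].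
  exists (fun _ => x); split => //; by case=> [|?] [|?].
have [p I] := IH (ltnW kn); have [p0 Hi He Hn] := I.
set C := Cset k p.
have xC : x \in C by apply/inC; exists 0.
have pkC : p k \in C by apply/inC; exists k.
have [y0 y0C] : exists y, y \notin C.
  have : 0 < #|~: C|.
    have := cardsC C; have : #|C| <= k.+1.
      by apply: leq_trans (leq_imset_card _ _) _; rewrite card_ord.
    move=> c1 c2; rewrite -(ltn_add2l #|C|) addn0 c2.
    exact: leq_ltn_trans c1 kn.
  by move=> /card_gt0P[y]; rewrite inE => yC; exists y.
set D := nbhd e (p k) :\: C.
have D1 : #|D| == 1.
  apply/negPn/negP => D1.
  have fC : fort e (~: C).
    apply: fort_compl; first by apply/set0Pn; exists y0; rewrite inE.
    move=> w /inC [i ik ->]; case: (ltngtP i k) ik => // [ilt|->] _ //.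
    by apply: sub_nbhd; apply: nbhdC I ilt.
  have nxC : forall y, y \notin C -> y != x.
    by move=> y yC; apply/eqP => yx; rewrite yx xC in yC.
  have nPxy : forall y, y \notin C -> ~ Pf x y.
    move=> y yC Pxy; apply: (H y (nxC y yC)); split => //.
    by exists (~: C); split => //; rewrite !inE yC xC.
  have deg1 : forall y, y \notin C -> #|nbhd e y| = 1.
    move=> y yC; apply/eqP; apply/negPn/negP => dy; apply: (nPxy y yC).
    have xy : x != y by rewrite eq_sym nxC.
    exists (~: [set y]); split; first exact: fort_setC1 xy dy.
    by rewrite !inE xy eqxx.
  have /eqP/cards1P[z Hz] := deg1 y0 y0C.
  have eyz : e y0 z by rewrite -in_nbhd Hz set11.
  have y0x : x != y0 by rewrite eq_sym nxC.
  case: (boolP (z \in C)) => [/inC [i ik zi] | zC].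
    have ik' : i = k.
      case: (ltngtP i k) ik => // ilt _.
      have : y0 \in C by apply: (subsetP (nbhdC I ilt)); rewrite in_nbhd -zi esymm.
      by rewrite (negbTE y0C).
    subst i.
    have y0D : y0 \in D by rewrite !inE y0C -zi esymm.
    have [y' y'D y'y] : exists2 y', y' \in D & y' != y0.
      have : 1 < #|D|.
        have : 0 < #|D| by apply/card_gt0P; exists y0.
        by move: D1; case: #|D| => [|[|]].
      move=> /card_gt1P [a [b [aD bD ab]]].
      case: (a =P y0) => [ay|ay]; last by exists a => //; apply/eqP.
      by exists b => //; rewrite -ay eq_sym.
    move: y'D; rewrite inE => /andP[y'C ey'].
    have k0 : 0 < k.
      rewrite lt0n; apply/eqP => k0; move: D1; apply/negP; rewrite negbK.
      rewrite (_ : D = nbhd e x) ?dx //.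
      apply/setP => u; rewrite !inE -p0 -k0; case: (boolP (u \in C)) => //= /inC [i].
      by rewrite k0 leqn0 => /eqP -> ->; rewrite eirr.
    have kk : k.-1.+1 = k by rewrite prednK.
    have xpk : x != p k.
      apply/eqP => xp; have := Hi 0 k (leq0n _) (leqnn _); rewrite p0 => /(_ xp) k0'.
      by rewrite -k0' in k0.
    apply: (nPxy y0 y0C); exists (~: [set y0; p k]); split; last first.
      by rewrite !inE eqxx negb_or y0x xpk.
    apply: fort_compl.
      by apply/set0Pn; exists x; rewrite !inE negb_or y0x xpk.
    move=> w; rewrite !inE => /orP[/eqP->|/eqP->].
      by apply: sub_nbhd; rewrite Hz zi; apply/subsetP => v; rewrite !inE => ->; rewrite orbT.
    have pk'C : p k.-1 \in C by apply/inC; exists k.-1 => //; rewrite -{2}kk leqW.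
    suff : 1 < #|nbhd e (p k) :\: [set y0; p k]| by case: #|_| => [|[|]].
    apply/card_gt1P; exists (p k.-1), y'; rewrite !inE; split.
    - have ek : e (p k) (p k.-1).
        by rewrite esymm -{2}kk; apply: He; rewrite kk.
      rewrite ek andbT negb_or; apply/andP; split.
        by apply/eqP => E; rewrite -E pk'C in y0C.
      apply/eqP => /Hi E; have := E (leq_pred _) (leqnn _).
      by move=> E'; lia.
    - rewrite -in_nbhd ey' andbT negb_or y'y /=; apply/eqP => E; by rewrite E pkC in y'C.
    - by apply/eqP => E; rewrite -E pk'C in y'C.
  have zx : z != x by apply: nxC.
  have Hz' : nbhd e z = [set y0].
    have /eqP/cards1P[w Hw] := deg1 z zC.
    have : y0 \in nbhd e z by rewrite in_nbhd esymm.
    by rewrite Hw inE => /eqP ->.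
  apply: (nPxy y0 y0C); exists (~: [set y0; z]); split; last first.
    by rewrite !inE ![x == _]eq_sym (negbTE (nxC _ y0C)) (negbTE zx) eqxx.
  apply: fort_compl.
    by apply/set0Pn; exists x; rewrite !inE ![x == _]eq_sym (negbTE (nxC _ y0C)) (negbTE zx).
  move=> w; rewrite !inE => /orP[/eqP->|/eqP->]; apply: sub_nbhd.
    by rewrite Hz; apply/subsetP => v; rewrite !inE => ->; rewrite orbT.
  by rewrite Hz'; apply/subsetP => v; rewrite !inE => ->.
have /cards1P [z Dz] := D1.
have zD : z \in D by rewrite Dz set11.
move: (zD); rewrite inE => /andP[zC ez]; rewrite in_nbhd in ez.
exists (fun i => if i == k.+1 then z else p i); split.
- by [].
- move=> i j ik jk.
  case: (i =P k.+1) => [->|ni]; case: (j =P k.+1) => [->|nj] //.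
  + move=> E; exfalso; move: zC; rewrite E => /negP; apply; apply/inC; exists j => //.
    by move: jk; rewrite leq_eqVlt => /orP[/eqP//|].
  + move=> E; exfalso; move: zC; rewrite -E => /negP; apply; apply/inC; exists i => //.
    by move: ik; rewrite leq_eqVlt => /orP[/eqP//|].
  + apply: Hi.
      by move: ik; rewrite leq_eqVlt => /orP[/eqP//|].
    by move: jk; rewrite leq_eqVlt => /orP[/eqP//|].
- move=> i ik; rewrite eqSS.
  case: (i =P k.+1) => [E|_]; first by rewrite E ltnn in ik.
  case: (i =P k) => [->|ni]; first by [].
  have ilt : i < k by rewrite ltn_neqAle -ltnS ik andbT; apply/eqP.
  by rewrite ?(ltn_eqF ilt) He.
- move=> i u ik eu.
  case: (i =P k.+1) => [E|_] in eu *; first by rewrite E ltnn in ik.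
  rewrite eqSS; case: (i =P k) => [ik'|ni] in eu *.
    subst i; case: (boolP (u \in C)) => [/inC[j jk uj]|uC].
      right; case: (ltngtP j k) jk => // [jlt|jk'] _; last by rewrite uj jk' eirr in eu.
      rewrite uj esymm in eu; case: (adj_gen I jlt (leqnn k) eu) => [kj|jk2].
        by exists j => //; rewrite (ltn_eqF (leq_trans jlt (leqnSn _))) uj.
      by rewrite -jk2 ltnNge leqnSn in jlt.
    left; apply/eqP; rewrite -in_set1 -Dz !inE uC /=; by [].
  have ilt : i < k by rewrite ltn_neqAle -ltnS ik andbT; apply/eqP.
  case: (Hn _ _ ilt eu) => [->|[j ji ->]].
    by left.
  right; exists j => //; rewrite (ltn_eqF (leq_trans (leq_trans _ ilt) (leqnSn _))) //.
  by rewrite -ji.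
Qed.


Lemma path_conv n' (f : T -> 'I_n'.+1) : bijective f ->
  (forall u v, e u v = path_rel (f u) (f v)) -> exists x, maximal_ZIr_set e [set x].
Proof.
move=> bf Hf; have [g K1 K2] := bf; exists (g ord0); apply/maximal1.
move=> y yx [_ [F [fF [yF xF]]]].
move: fF => /andP[_ /forallP Hfort].
suff all : forall m u, f u <= m -> u \notin F by rewrite (negbTE (all _ y (leqnn _))) in yF.
elim=> [|m IHm] u.
  rewrite leqn0 => /eqP fu0.
  have -> : u = g ord0 by rewrite -(K1 u); congr g; apply: val_inj.
  exact: xF.
rewrite leq_eqVlt => /orP[/eqP fu|/IHm //].
have mn : m < n'.+1 by apply: ltnW; rewrite -fu ltn_ord.
set w := g (inord m).
have fw : nat_of_ord (f w) = m by rewrite /w K2 inordK.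
have wF : w \notin F by apply: IHm; rewrite fw.
apply/negP => uF.
have := Hfort w; rewrite wF /= => /negP; apply.
rewrite (_ : nbhd e w :&: F = [set u]) ?cards1 //.
apply/setP => v; rewrite !inE Hf /path_rel fw.
case: (v =P u) => [->|vu]; first by rewrite fu eqxx uF.
case: (boolP (v \in F)) => vF; last by rewrite andbF.
rewrite andbT; apply/negP => /orP[/eqP mv|/eqP vm].
  by apply: vu; apply: (bij_inj bf); apply: val_inj => /=; rewrite fu mv.
by move: vF; rewrite (negbTE (IHm v _)) // -ltnS vm.
Qed.

Lemma star_conv n' (f : T -> 'I_n'.+1) : bijective f ->
  (forall u v, e u v = star_rel (f u) (f v)) -> exists x, maximal_ZIr_set e [set x].
Proof.
move=> bf Hf; have [g K1 K2] := bf; set x := g ord0; exists x; apply/maximal1.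
have f0 : forall v, (nat_of_ord (f v) == 0) = (v == x).
  move=> v; apply/eqP/eqP => [h|->]; last by rewrite /x K2.
  by rewrite -(K1 v); congr g; apply: val_inj.
move=> y yx [[F [fF [xF yF]]] _].
move: fF => /andP[_ /forallP Hfort].
have := Hfort y; rewrite yF /= => /negP; apply.
rewrite (_ : nbhd e y :&: F = [set x]) ?cards1 //.
apply/setP => v; rewrite !inE Hf /star_rel !f0 (negbTE yx) /= (inj_eq (bij_inj bf)).
case: (v =P x) => [->|vx] /=; first by rewrite yx xF.
by rewrite !andbF.
Qed.

End Main.

Theorem theorem5p8 (T : finType) (e : rel T) (n : nat) :
  symmetric e -> irreflexive e -> #|T| = n -> 1 <= n ->
  (zir e = 1 <-> graph_iso e (@path_rel n) \/ graph_iso e (@star_rel n)).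
Proof.
move=> sy ir cT n1; case: n cT n1 => // n' cT _; split.
  move=> z1; have [x mx] : exists x, maximal_ZIr_set e [set x].
    by apply: zir1_ex z1; rewrite cT.
  have H := proj1 (maximal1 e x) mx.
  case: (boolP (#|nbhd e x| == 1)) => [/eqP dx | dx].
    have n'T : n' < #|T| by rewrite cT.
    left; have [p I] := chain sy ir H dx n'T.
    exact (path_iso sy ir cT I).
  right; have SC := star_case sy ir H dx.
  pose h := fun u => cast_ord cT (enum_rank u).
  pose f := fun u => tperm (h x) ord0 (h u).
  have bf : bijective f.
    exists (fun i => enum_val (cast_ord (esym cT) (tperm (h x) ord0 i))).
      by move=> u; rewrite /f tpermK /h cast_ordK enum_rankK.
    by move=> i; rewrite /f /h enum_valK cast_ordKV tpermK.
  have f0 : forall v, (nat_of_ord (f v) == 0) = (v == x).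
    move=> v; apply/idP/eqP => [h0|->]; last by rewrite /f tpermL.
    apply: (bij_inj bf); apply: val_inj; rewrite /= (eqP h0) /f tpermL.
    by [].
  exists f; split => // u v; rewrite SC /star_rel !f0 (inj_eq (bij_inj bf)).
  by [].
case=> [[f [bf Hf]]|[f [bf Hf]]].
  by have [x mx] := path_conv bf Hf; apply: zir_eq1 mx.
by have [x mx] := star_conv bf Hf; apply: zir_eq1 mx.
Qed.
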